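(* For any fixed parameters $p_0>0$, $r>1$ and any fixed (bid-independent) processing order of the bidders, the multiplicative price update algorithm, applied to the declared types, is a truthful mechanism without money and with verification for CAs with unknown $k$-minded bidders.
   Context: Multi-unit combinatorial auction: a set $\mathsf U$ of $m$ goods, each with supply $b\ge1$; $n$ bidders. True type of bidder $i$: $t_i=(v_i,\mathcal S_i)$ with $\mathcal S_i$ a private collection of $k$ nonempty subsets of $\mathsf U$ and $v_i:\mathcal S_i\to\mathbb R_{\ge0}$ private, extended by $v_i(T)=\max\{v_i(S'):S'\in\mathcal S_i,S'\subseteq T\}$ ($0$ if none). Declarations $c=(w,\mathcal W)$ have the same form; $D_i$ is the set of all declarations. Multiplicative price update algorithm on declarations $(w_i,\mathcal W_i)$: $p_e^1=p_0$ for every good; for each bidder $i$ in the fixed order: let $S_i$ maximize $w_i(S)$ among $S\in\mathcal W_i$ with $w_i(S)\ge\sum_{e\in S}p_e^i$ ($S_i=\emptyset$ if none); multiply the price of each $e\in S_i$ by $r$; allocate $S_i$ to $i$. Verification: bidder $i$ with true type $t_i$ facing $\mathbf b_{-i}$ may declare $b_i=(z,\mathcal T)$ only if $z(A_i(b_i,\mathbf b_{-i}))\le v_i(A_i(b_i,\mathbf b_{-i}))$. A mechanism $A$ is truthful without money and with verification if for all $i$, $\mathbf b_{-i}$, true types $t_i$ and declarations $b_i$ permitted by verification, $v_i(A_i(t_i,\mathbf b_{-i}))\ge v_i(A_i(b_i,\mathbf b_{-i}))$. *)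

(* Defs.v *)
From HB Require Import structures.
From mathcomp Require Import all_boot all_order all_algebra all_fingroup.
Set Implicit Arguments. Unset Strict Implicit. Unset Printing Implicit Defensive.
Import Order.TTheory GRing.Theory Num.Theory.
Local Open Scope ring_scope.

Section MPU.
Variables (G : finType) (R : realFieldType).

(* A type / declaration: (valuation on the declared sets, collection of sets). *)
Definition decl := (({set G} -> R) * {set {set G}})%type.

Definition kminded (k : nat) (d : decl) : Prop :=
  #|d.2| = k /\ set0 \notin d.2 /\ (forall S, S \in d.2 -> 0 <= d.1 S).

Definition ext_val (d : decl) (T : {set G}) : R :=
  \big[Num.max/0]_(S' in d.2 | S' \subset T) d.1 S'.

Definition price_sum (p : G -> R) (S : {set G}) : R := \sum_(e in S) p e.

Definition candidates (p : G -> R) (d : decl) : {set {set G}} :=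
  [set S in d.2 | price_sum p S <= d.1 S].

(* A maximizer of the declared value among candidates (ties broken by the
   fixed enumeration of {set G}); the empty set if there is no candidate. *)
Definition choose_set (p : G -> R) (d : decl) : {set G} :=
  odflt set0 [pick S in candidates p d |
               [forall T in candidates p d, d.1 T <= d.1 S]].

Definition update_prices (r : R) (p : G -> R) (S : {set G}) : G -> R :=
  fun e => if e \in S then p e * r else p e.

Fixpoint mpu_run (n : nat) (r : R) (bs : 'I_n -> decl) (p : G -> R)
    (s : seq 'I_n) (A : 'I_n -> {set G}) : 'I_n -> {set G} :=
  match s with
  | [::] => A
  | i :: s' =>
      let S := choose_set p (bs i) in
      mpu_run r bs (update_prices r p S) s' (fun j => if j == i then S else A j)
  end.

(* The mechanism: initial prices p0, multiplier r, processing order sigma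
   (bidder sigma j is processed at step j). *)
Definition mpu (n : nat) (p0 r : R) (sigma : {perm 'I_n}) (bs : 'I_n -> decl)
    : 'I_n -> {set G} :=
  mpu_run r bs (fun _ => p0) [seq sigma j | j <- enum 'I_n] (fun _ => set0).

Definition upd_profile (n : nat) (bs : 'I_n -> decl) (i : 'I_n) (d : decl)
    : 'I_n -> decl := fun j => if j == i then d else bs j.

End MPU.

(* Main.v *)
Require Import Defs.
From HB Require Import structures.
From mathcomp Require Import all_boot all_order all_algebra all_fingroup.
Set Implicit Arguments. Unset Strict Implicit. Unset Printing Implicit Defensive.
Import Order.TTheory GRing.Theory Num.Theory.
Local Open Scope ring_scope.

Section S.
Variables (G : finType) (R : realFieldType).

Lemma price_sub (p : G -> R) (A B : {set G}) :
  (forall e, 0 <= p e) -> A \subset B -> price_sum p A <= price_sum p B.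
Proof.
move=> p0 AB; rewrite /price_sum [X in _ <= X](big_setID A) /= (setIidPr AB).
by rewrite lerDl sumr_ge0.
Qed.

Lemma ext_ge0 (d : decl G R) T : 0 <= ext_val d T.
Proof. apply: (big_rec (fun x => 0 <= x)) => // x y _ hy; by rewrite le_max hy orbT. Qed.

Lemma ext_ge (d : decl G R) (T S : {set G}) : S \in d.2 -> S \subset T -> d.1 S <= ext_val d T.
Proof.
move=> H1 H2; rewrite /ext_val; by apply: le_bigmax_cond; rewrite H1 H2.
Qed.

Lemma ext_cases (d : decl G R) (T : {set G}) :
  ext_val d T = 0 \/ exists2 S, (S \in d.2) && (S \subset T) & ext_val d T = d.1 S.
Proof.
rewrite /ext_val; apply: (big_ind (fun x => x = 0 \/ exists2 S, (S \in d.2) && (S \subset T) & x = d.1 S)).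
- by left.
- move=> x y Hx Hy; rewrite /Num.max; case: ifP => _; [exact: Hy| exact: Hx].
- by move=> S HS; right; exists S.
Qed.

Lemma choose_max (p : G -> R) (d : decl G R) S :
  S \in candidates p d -> exists2 S0, S0 \in candidates p d & choose_set p d = S0 /\ d.1 S <= d.1 S0.
Proof.
move=> HS; rewrite /choose_set; case: pickP => [S0 /andP[H0 /forall_inP H1]|H].
  by exists S0 => //; split => //; apply: H1.
exfalso; case: (arg_maxP (fun T => d.1 T) HS) => S0 H0 H1.
have H0' : S0 \in candidates p d := H0.
have := H S0 => /=; rewrite H0' /=; move/negbT/negP; apply; apply/forall_inP => T HT; exact: H1.
Qed.

Lemma core (p : G -> R) (b t : decl G R) : (forall e, 0 <= p e) ->
  ext_val b (choose_set p b) <= ext_val t (choose_set p b) ->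
  ext_val t (choose_set p b) <= ext_val t (choose_set p t).
Proof.
move=> p0 Hv.
have Hb : price_sum p (choose_set p b) <= ext_val b (choose_set p b).
  rewrite /choose_set; case: pickP => [S /andP[HS _]|_] /=.
    move: HS; rewrite inE => /andP[H1 H2]; apply: le_trans H2 _; exact: ext_ge.
  by rewrite /price_sum big_set0 ext_ge0.
case: (ext_cases t (choose_set p b)) => [->|[S' /andP[H1 H2] E]]; first exact: ext_ge0.
have HS' : S' \in candidates p t.
  rewrite inE H1 /= -E; apply: le_trans (price_sub p0 H2) _; exact: le_trans Hb Hv.
have [S0 HS0 [-> HS]] := choose_max HS'.
rewrite E; apply: le_trans HS _; apply: ext_ge => //.
by move: HS0; rewrite inE => /andP[].
Qed.

Variables (n : nat) (r : R).

Fixpoint pr (bs : 'I_n -> decl G R) (p : G -> R) (s : seq 'I_n) : G -> R :=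
  match s with
  | [::] => p
  | j :: s' => pr bs (update_prices r p (choose_set p (bs j))) s'
  end.

Lemma run_notin (bs : 'I_n -> decl G R) (p : G -> R) (s : seq 'I_n) (A : 'I_n -> {set G}) (i : 'I_n) : i \notin s -> mpu_run r bs p s A i = A i.
Proof.
elim: s p A => [|j s IH] p A //=; rewrite inE negb_or => /andP[Hij Hi].
by rewrite IH // (negbTE Hij).
Qed.

Lemma run_at (bs : 'I_n -> decl G R) (p : G -> R) (s1 s2 : seq 'I_n) (A : 'I_n -> {set G}) (i : 'I_n) : i \notin s1 -> i \notin s2 ->
  mpu_run r bs p (s1 ++ i :: s2) A i = choose_set (pr bs p s1) (bs i).
Proof.
elim: s1 p A => [|j s IH] p A /=.
  by move=> _ H; rewrite run_notin // eqxx.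
rewrite inE negb_or => /andP[_ Hi] H2; exact: IH.
Qed.

Lemma pr_ext (bs bs' : 'I_n -> decl G R) (p : G -> R) (s : seq 'I_n) : (forall j, j \in s -> bs j = bs' j) -> pr bs p s = pr bs' p s.
Proof.
elim: s p => [|j s IH] p //= H.
rewrite H ?mem_head //; apply: IH => x Hx; apply: H; by rewrite inE Hx orbT.
Qed.

Lemma pr_ge0 (bs : 'I_n -> decl G R) (p : G -> R) (s : seq 'I_n) : 0 <= r -> (forall e, 0 <= p e) -> forall e, 0 <= pr bs p s e.
Proof.
move=> r0; elim: s p => [|j s IH] p //= H; apply: IH => e.
rewrite /update_prices; case: ifP => _ //; exact: mulr_ge0.
Qed.
End S.

Theorem theorem4 (G : finType) (R : realFieldType) (n k : nat) (p0 r : R)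
    (sigma : {perm 'I_n}) :
  0 < p0 -> 1 < r ->
  forall (bs : 'I_n -> decl G R), (forall j, kminded k (bs j)) ->
  forall (i : 'I_n) (t b : decl G R),
    kminded k t -> kminded k b ->
    ext_val b (mpu p0 r sigma (upd_profile bs i b) i)
      <= ext_val t (mpu p0 r sigma (upd_profile bs i b) i) ->
    ext_val t (mpu p0 r sigma (upd_profile bs i b) i)
      <= ext_val t (mpu p0 r sigma (upd_profile bs i t) i).
Proof.
move=> hp0 hr bs _ i t b _ _.
rewrite /mpu.
set s := [seq sigma j | j <- enum 'I_n].
have us : uniq s by rewrite map_inj_uniq ?enum_uniq //; exact: perm_inj.
have is_ : i \in s by apply/mapP; exists (sigma^-1 i)%g; rewrite ?mem_enum ?permKV.
case/splitPr: is_ us => s1 s2.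
rewrite cat_uniq /= negb_or => /and3P[_ /andP[Hi1 _] /andP[Hi2 _]].
rewrite !run_at // /upd_profile eqxx.
rewrite (@pr_ext _ _ _ _ (fun j => if j == i then b else bs j) (fun j => if j == i then t else bs j)).
  apply: core; apply: pr_ge0; first by apply: le_trans (ltW hr).
  by move=> _; apply: ltW.
move=> j Hj; have -> // : (j == i) = false.
by apply/eqP => E; move: Hi1; rewrite -E Hj.
Qed.
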